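(* Let $\mathcal{P}=\{(P_1,\Gamma_1),\ldots,(P_m,\Gamma_m)\}$ be a set of $m$ uncertain points in $\mathbb{R}^2$ under the multipoint model with $P=\bigcup_{i=1}^m P_i$ and $|P|=n$. For any $\beta\in[0,1]$, the $\beta$-hull of $\mathcal{P}$ has $O(n)$ vertices.
   Context: Multipoint model: $P_i=\{p_i^1,\ldots,p_i^{n_i}\}\subset\mathbb{R}^2$ are the possible sites of the $i$-th uncertain point and $\Gamma_i=\{\gamma_i^1,\ldots,\gamma_i^{n_i}\}\subset(0,1]$ the associated probabilities, with $\sum_j\gamma_i^j\le1$. A convex set $C\subseteq\mathbb{R}^2$ is $\beta$-dense with respect to $\mathcal{P}$ if $\sum_{j:\,p_i^j\in C}\gamma_i^j\ge\beta$ for every $i\le m$. The $\beta$-hull of $\mathcal{P}$ is the intersection of all convex $\beta$-dense sets with respect to $\mathcal{P}$. *)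

(* Defs.v *)
From Stdlib Require Import Reals List Classical ClassicalEpsilon.
Import ListNotations.
Open Scope R_scope.

Definition point := (R * R)%type.

Definition comb (t : R) (x y : point) : point :=
  ((1 - t) * fst x + t * fst y, (1 - t) * snd x + t * snd y).

Definition convex (C : point -> Prop) : Prop :=
  forall x y t, C x -> C y -> 0 <= t <= 1 -> C (comb t x y).

(* An uncertain point in the multipoint model: the list of pairs
   (p_i^j, gamma_i^j), j = 1..n_i. *)
Definition upoint := list (point * R).

Definition sites (U : upoint) : list point := map fst U.

Definition valid_upoint (U : upoint) : Prop :=
  NoDup (sites U) /\
  (forall q, In q U -> 0 < snd q <= 1) /\
  fold_right Rplus 0 (map snd U) <= 1.

Definition mass (C : point -> Prop) (U : upoint) : R :=
  fold_right Rplus 0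
    (map (fun q => if excluded_middle_informative (C (fst q)) then snd q else 0) U).

Definition beta_dense (beta : R) (Ps : list upoint) (C : point -> Prop) : Prop :=
  forall U, In U Ps -> beta <= mass C U.

Definition beta_hull (beta : R) (Ps : list upoint) : point -> Prop :=
  fun x => forall C, convex C -> beta_dense beta Ps C -> C x.

(* vertices of a convex set = its extreme points *)
Definition extreme_point (S : point -> Prop) (x : point) : Prop :=
  S x /\ forall y z t, S y -> S z -> 0 < t < 1 -> x = comb t y z -> y = z.

(* Main.v *)
Require Import Defs.
From Stdlib Require Import Reals List Lra Lia Psatz Classical ClassicalEpsilon.
Import ListNotations.
Open Scope R_scope.

Definition vsub (a b : point) : point := (fst a - fst b, snd a - snd b).
Definition cr (a b : point) : R := fst a * snd b - snd a * fst b.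
Definition dt (a b : point) : R := fst a * fst b + snd a * snd b.
Definition dec (P : Prop) : bool := if excluded_middle_informative P then true else false.

Lemma dec_true (P : Prop) : dec P = true <-> P.
Proof. unfold dec; destruct (excluded_middle_informative P); split; intros; auto; discriminate. Qed.

Lemma length_filter_split {A} (f : A -> bool) (l : list A) :
  length l = (length (filter f l) + length (filter (fun x => negb (f x)) l))%nat.
Proof. induction l; simpl; auto. destruct (f a); simpl; lia. Qed.

Lemma mass_mono (C D : point -> Prop) (U : upoint) :
  (forall q, In q U -> 0 <= snd q) ->
  (forall q, In q U -> C (fst q) -> D (fst q)) -> mass C U <= mass D U.
Proof.
  induction U as [|a U IH]; intros Hn Hi; unfold mass; simpl. lra.
  fold (mass C U) (mass D U).
  assert (IH' := IH (fun q h => Hn q (or_intror h)) (fun q h => Hi q (or_intror h))).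
  assert (Ha := Hn a (or_introl eq_refl)).
  destruct (excluded_middle_informative (C (fst a))) as [c|c];
  destruct (excluded_middle_informative (D (fst a))) as [d|d]; try lra.
  exfalso; apply d, Hi; [left|]; auto.
Qed.

Lemma argmax (L : list point) (Q : point -> Prop) (f : point -> R) :
  (exists v, In v L /\ Q v) ->
  exists m, In m L /\ Q m /\ forall v, In v L -> Q v -> f v <= f m.
Proof.
  induction L as [|a L IH]; intros [v [Hv Qv]]. destruct Hv.
  destruct (classic (exists v, In v L /\ Q v)) as [Hex|Hno].
  - destruct (IH Hex) as [m [Hm [Qm Hmax]]].
    destruct (classic (Q a /\ f m < f a)) as [[Qa Hlt]|Hn].
    + exists a. split; [left; auto|split; auto]. intros w [<-|Hw] Qw. lra.
      specialize (Hmax w Hw Qw); lra.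
    + exists m. split; [right; auto|split; auto]. intros w [<-|Hw] Qw; auto.
      apply Rnot_lt_le; intro; apply Hn; auto.
  - destruct Hv as [->|Hv]; [|exfalso; apply Hno; eauto].
    exists v; split; [left; auto|split; auto]. intros w [<-|Hw] Qw. lra.
    exfalso; apply Hno; eauto.
Qed.

Lemma sum_le {A} (l : list A) (g : A -> R) :
  (forall z, In z l -> 0 <= g z) ->
  0 <= fold_right (fun z acc => g z + acc) 0 l /\
  forall z, In z l -> g z <= fold_right (fun z acc => g z + acc) 0 l.
Proof.
  induction l as [|a l IH]; intros Hg; simpl. split; [lra| intros _ []].
  destruct (IH (fun z h => Hg z (or_intror h))) as [H1 H2].
  assert (Ha := Hg a (or_introl eq_refl)).
  split. lra. intros z [<-|Hz]. lra. specialize (H2 z Hz); lra.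
Qed.

Lemma maxlist (E : point -> Prop) (N : nat) :
  (forall L, NoDup L -> (forall x, In x L -> E x) -> (length L <= N)%nat) ->
  exists V, (length V <= N)%nat /\ forall x, E x -> In x V.
Proof.
  intros Hb.
  assert (aux : forall m L, NoDup L -> (forall x, In x L -> E x) ->
            (length L + m = N)%nat ->
            exists V, (length V <= N)%nat /\ forall x, E x -> In x V).
  { induction m as [|m IH]; intros L HL HE Hlen.
    - exists L; split; [lia|]. intros x Ex. apply NNPP; intro Hn.
      assert (Hc := Hb (x :: L) (NoDup_cons x Hn HL)
                 (fun y hy => match hy with or_introl e => eq_ind x E Ex y e | or_intror h => HE y h end)).
      simpl in Hc; lia.
    - destruct (classic (forall x, E x -> In x L)) as [Hall|Hn].
      + exists L; split; [lia|auto].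
      + apply not_all_ex_not in Hn as [x Hx].
        apply imply_to_and in Hx as [Ex Hx].
        apply (IH (x :: L)). constructor; auto.
        intros y [<-|hy]; auto. simpl; lia. }
  apply (aux N []); simpl; auto. constructor. intros x [].
Qed.

Lemma count_witness (G : point -> Prop) (W : point -> point -> Prop) (Pl : list point) :
  (forall q L', NoDup L' -> (forall x, In x L' -> G x /\ W q x) -> (length L' <= 2)%nat) ->
  forall L, NoDup L -> (forall x, In x L -> G x /\ exists q, In q Pl /\ W q x) ->
  (length L <= 2 * length Pl)%nat.
Proof.
  intros Hq. induction Pl as [|q Pl IH]; intros L HL HW.
  - destruct L as [|x L]; simpl; auto. exfalso.
    destruct (HW x (or_introl eq_refl)) as [_ [q [[] _]]].
  - rewrite (length_filter_split (fun x => dec (W q x)) L).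
    assert (H1 : (length (filter (fun x => dec (W q x)) L) <= 2)%nat).
    { apply (Hq q). apply NoDup_filter; auto.
      intros x Hx. apply filter_In in Hx as [Hx Hd]. apply (proj1 (dec_true (W q x))) in Hd.
      split; auto. apply (proj1 (HW x Hx)). }
    assert (H2 : (length (filter (fun x => negb (dec (W q x))) L) <= 2 * length Pl)%nat).
    { apply IH. apply NoDup_filter; auto.
      intros x Hx. apply filter_In in Hx as [Hx Hd].
      destruct (HW x Hx) as [Gx [q' [[<-|Hq'] Wq']]]; split; auto.
      - exfalso. assert (dec (W q x) = true) by (apply dec_true; auto).
        rewrite H in Hd; discriminate.
      - eauto. }
    simpl; lia.
Qed.

Lemma ident (d m w : point) : dt d d * cr m w = dt d m * cr d w - dt d w * cr d m.
Proof. destruct d, m, w; unfold dt, cr; simpl; ring. Qed.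

Lemma same_sign_max (d m w : point) : 0 < dt d d -> 0 < cr d m * cr d w ->
  dt d w / cr d w <= dt d m / cr d m -> 0 <= cr m w.
Proof.
  intros Hd Hs Hf.
  assert (cm : cr d m <> 0) by (intro e; rewrite e in Hs; lra).
  assert (cw : cr d w <> 0) by (intro e; rewrite e in Hs; lra).
  set (fw := dt d w / cr d w) in *. set (fm := dt d m / cr d m) in *.
  assert (e1 : dt d w = fw * cr d w) by (unfold fw; field; auto).
  assert (e2 : dt d m = fm * cr d m) by (unfold fm; field; auto).
  assert (I := ident d m w). rewrite e1, e2 in I.
  assert (0 <= dt d d * cr m w) by nra.
  apply Rnot_lt_le; intro; nra.
Qed.

Lemma cone (L : list point) (d : point) : 0 < dt d d -> L <> [] ->
  (forall v, In v L -> exists w, In w L /\ cr v w < 0) ->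
  (exists a b, In a L /\ In b L /\ cr a b < 0 /\ cr d b <= 0 /\ cr a d <= 0) \/
  (exists a, In a L /\ cr d a = 0 /\ 0 < dt d a).
Proof.
  intros Hd HL Hyp.
  destruct (classic (exists a, In a L /\ cr d a = 0 /\ 0 < dt d a)) as [Y|NZ]; [right; auto|left].
  assert (crd : forall a b, cr a b = - cr b a) by (intros [] []; unfold cr; simpl; ring).
  set (f := fun v => dt d v / cr d v).
  destruct (classic (exists v, In v L /\ 0 < cr d v)) as [A|NA].
  - destruct (argmax L (fun v => 0 < cr d v) f A) as [m [Hm [Qm Hmax]]].
    destruct (Hyp m Hm) as [w [Hw Hmw]].
    destruct (Rtotal_order (cr d w) 0) as [Hneg|[Hz|Hpos]].
    + exists m, w. repeat split; auto. lra. rewrite crd; lra.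
    + exfalso. assert (I := ident d m w). rewrite Hz in I.
      assert (dt d w > 0) by nra. apply NZ; eauto.
    + exfalso. assert (0 <= cr m w); [|lra].
      apply (same_sign_max d m w Hd); [nra|]. apply (Hmax w Hw Hpos).
  - assert (Hle : forall v, In v L -> cr d v <= 0).
    { intros v Hv; apply Rnot_lt_le; intro; apply NA; eauto. }
    destruct (classic (exists v, In v L /\ cr d v = 0)) as [[v [Hv Hz]]|NZ2].
    + exfalso. destruct (Hyp v Hv) as [w [Hw Hvw]].
      assert (dt d v <= 0) by (apply Rnot_lt_le; intro; apply NZ; eauto).
      assert (I := ident d v w). rewrite Hz in I.
      assert (cr d w <= 0) by auto. nra.
    + assert (Hlt : forall v, In v L -> cr d v < 0).
      { intros v Hv. destruct (Rle_lt_or_eq_dec _ _ (Hle v Hv)); auto.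
        exfalso; apply NZ2; eauto. }
      destruct L as [|v0 L0]; [congruence|].
      destruct (argmax (v0 :: L0) (fun _ => True) f) as [m [Hm [_ Hmax]]].
      { exists v0; split; [left|]; auto. }
      exfalso. destruct (Hyp m Hm) as [w [Hw Hmw]].
      assert (0 <= cr m w); [|lra].
      apply (same_sign_max d m w Hd). assert (Hm1 := Hlt m Hm); assert (Hw1 := Hlt w Hw); nra.
      apply (Hmax w Hw I).
Qed.

Lemma reach2 (C : point -> Prop) (x sa sb d : point) (eps : R) :
 convex C -> C x -> C sa -> C sb -> 0 < dt d d ->
 cr (vsub sa x) (vsub sb x) < 0 -> cr d (vsub sb x) <= 0 -> cr (vsub sa x) d <= 0 ->
 0 < eps ->
 eps * (1 + Rabs (cr d (vsub sb x) / cr (vsub sa x) (vsub sb x))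
          + Rabs (cr (vsub sa x) d / cr (vsub sa x) (vsub sb x))) <= 1 ->
 C (fst x + eps * fst d, snd x + eps * snd d).
Proof.
  intros HC Cx Ca Cb Hd Hc Hdb Had He Heps.
  destruct x as [x1 x2], sa as [a1 a2], sb as [b1 b2], d as [d1 d2].
  unfold cr, vsub, dt in *; simpl in *.
  set (c := (a1 - x1) * (b2 - x2) - (a2 - x2) * (b1 - x1)) in *.
  set (al := (d1 * (b2 - x2) - d2 * (b1 - x1)) / c) in *.
  set (be := ((a1 - x1) * d2 - (a2 - x2) * d1) / c) in *.
  assert (cn : c <> 0) by lra.
  assert (e1 : al * c = d1 * (b2 - x2) - d2 * (b1 - x1)) by (unfold al; field; auto).
  assert (e2 : be * c = (a1 - x1) * d2 - (a2 - x2) * d1) by (unfold be; field; auto).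
  assert (hal : 0 <= al) by nra. assert (hbe : 0 <= be) by nra.
  rewrite (Rabs_pos_eq al hal), (Rabs_pos_eq be hbe) in Heps.
  assert (D1 : d1 = al * (a1 - x1) + be * (b1 - x1)) by (unfold al, be, c in *; field; auto).
  assert (D2 : d2 = al * (a2 - x2) + be * (b2 - x2)) by (unfold al, be, c in *; field; auto).
  assert (hs : 0 < al + be).
  { destruct (Rle_lt_or_eq_dec 0 (al+be) ltac:(lra)) as [h|h]; [auto|].
    exfalso. assert (z1 : al = 0) by lra. assert (z2 : be = 0) by lra.
    rewrite D1, D2, z1, z2 in Hd. nra. }

  assert (Cy : C (comb (be / (al + be)) (a1, a2) (b1, b2))).
  { apply HC; auto. split. unfold Rdiv; apply Rmult_le_pos; [lra|]; left; apply Rinv_0_lt_compat; lra.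
    apply (Rmult_le_reg_r (al+be)); auto. field_simplify; lra. }
  assert (Cz := HC (x1, x2) _ (eps * (al + be)) Cx Cy ltac:(split; nra)).
  replace (x1 + eps * d1, x2 + eps * d2) with
    (comb (eps * (al + be)) (x1, x2) (comb (be / (al + be)) (a1, a2) (b1, b2))); auto.
  unfold comb; simpl. f_equal; [rewrite D1|rewrite D2]; field; lra.
Qed.

Lemma param (a v : point) : cr a v = 0 -> 0 < dt a a ->
  fst v = (dt a v / dt a a) * fst a /\ snd v = (dt a v / dt a a) * snd a.
Proof.
  destruct a as [a1 a2], v as [v1 v2]; unfold cr, dt; simpl; intros Hc Hd.
  assert (E1 : (a1*v1+a2*v2)*a1 = v1*(a1*a1+a2*a2)).
  { replace ((a1*v1+a2*v2)*a1) with (v1*(a1*a1+a2*a2) + a2*(a1*v2-a2*v1)) by ring. rewrite Hc; ring. }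
  assert (E2 : (a1*v1+a2*v2)*a2 = v2*(a1*a1+a2*a2)).
  { replace ((a1*v1+a2*v2)*a2) with (v2*(a1*a1+a2*a2) - a1*(a1*v2-a2*v1)) by ring. rewrite Hc; ring. }
  split.
  - replace ((a1*v1+a2*v2)/(a1*a1+a2*a2)*a1) with ((a1*v1+a2*v2)*a1/(a1*a1+a2*a2)) by (field; lra).
    rewrite E1; field; lra.
  - replace ((a1*v1+a2*v2)/(a1*a1+a2*a2)*a2) with ((a1*v1+a2*v2)*a2/(a1*a1+a2*a2)) by (field; lra).
    rewrite E2; field; lra.
Qed.

Lemma reach1 (C : point -> Prop) (x sa d : point) (eps : R) :
 convex C -> C x -> C sa ->
 cr d (vsub sa x) = 0 -> 0 < dt d (vsub sa x) ->
 0 < eps -> eps * (1 + Rabs (dt d (vsub sa x) / dt (vsub sa x) (vsub sa x))) <= 1 ->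
 C (fst x + eps * fst d, snd x + eps * snd d).
Proof.
  intros HC Cx Ca Hc Hp He Heps.
  assert (Haa : 0 < dt (vsub sa x) (vsub sa x)).
  { destruct x, sa, d; unfold dt, vsub, cr in *; simpl in *.
    apply Rnot_le_lt; intro. assert (r1 - r = 0) by nra. assert (r2 - r0 = 0) by nra. nra. }
  assert (Hc' : cr (vsub sa x) d = 0) by (destruct x, sa, d; unfold cr, vsub in *; simpl in *; lra).
  destruct (param _ _ Hc' Haa) as [P1 P2].
  assert (dc : dt (vsub sa x) d = dt d (vsub sa x)) by (unfold dt; ring).
  rewrite dc in P1, P2.
  set (la := dt d (vsub sa x) / dt (vsub sa x) (vsub sa x)) in *.
  assert (hla : 0 < la) by (unfold la; apply Rdiv_lt_0_compat; auto).
  rewrite (Rabs_pos_eq la) in Heps by lra.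
  assert (Cz := HC x sa (eps * la) Cx Ca ltac:(split; nra)).
  replace (fst x + eps * fst d, snd x + eps * snd d) with (comb (eps * la) x sa); auto.
  destruct x, sa, d; unfold comb, vsub in *; simpl in *. f_equal; [rewrite P1|rewrite P2]; ring.
Qed.

Lemma mid_contra (S : point -> Prop) (q1 q2 u1 u2 ta tb tc : R) :
  0 < u1 * u1 + u2 * u2 -> ta < tb /\ tb < tc ->
  extreme_point S (q1 + ta * u1, q2 + ta * u2) ->
  extreme_point S (q1 + tb * u1, q2 + tb * u2) ->
  extreme_point S (q1 + tc * u1, q2 + tc * u2) -> False.
Proof.
  intros Hu [h1 h2] [Sa _] [_ Eb] [Sc _].
  assert (E := Eb _ _ ((tb - ta) / (tc - ta)) Sa Sc).
  assert (Ht : 0 < (tb - ta) / (tc - ta) < 1).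
  { split. apply Rdiv_lt_0_compat; lra.
    apply (Rmult_lt_reg_r (tc - ta)); [lra|]. field_simplify; lra. }
  specialize (E Ht).
  assert (Heq : (q1 + ta * u1, q2 + ta * u2) = (q1 + tc * u1, q2 + tc * u2)).
  { apply E. unfold comb; simpl. f_equal; field; lra. }
  injection Heq; intros e2 e1.
  assert (u1 = 0) by (apply (Rmult_eq_reg_l (ta - tc)); lra).
  assert (u2 = 0) by (apply (Rmult_eq_reg_l (ta - tc)); lra).
  subst; lra.
Qed.

Lemma three_pts (S : point -> Prop) (q1 q2 u1 u2 t1 t2 t3 : R) :
  0 < u1 * u1 + u2 * u2 -> t1 <> t2 -> t2 <> t3 -> t1 <> t3 ->
  extreme_point S (q1 + t1 * u1, q2 + t1 * u2) ->
  extreme_point S (q1 + t2 * u1, q2 + t2 * u2) ->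
  extreme_point S (q1 + t3 * u1, q2 + t3 * u2) -> False.
Proof.
  intros Hu n12 n23 n13 E1 E2 E3.
  first [ exact (mid_contra S q1 q2 u1 u2 t1 t2 t3 Hu ltac:(lra) E1 E2 E3)
        | exact (mid_contra S q1 q2 u1 u2 t1 t3 t2 Hu ltac:(lra) E1 E3 E2)
        | exact (mid_contra S q1 q2 u1 u2 t2 t1 t3 Hu ltac:(lra) E2 E1 E3)
        | exact (mid_contra S q1 q2 u1 u2 t2 t3 t1 Hu ltac:(lra) E2 E3 E1)
        | exact (mid_contra S q1 q2 u1 u2 t3 t1 t2 Hu ltac:(lra) E3 E1 E2)
        | exact (mid_contra S q1 q2 u1 u2 t3 t2 t1 Hu ltac:(lra) E3 E2 E1)
        | idtac ].
  destruct (Rlt_or_le t1 t2); destruct (Rlt_or_le t2 t3); destruct (Rlt_or_le t1 t3);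
  first [ exact (mid_contra S q1 q2 u1 u2 t1 t2 t3 Hu ltac:(lra) E1 E2 E3)
        | exact (mid_contra S q1 q2 u1 u2 t1 t3 t2 Hu ltac:(lra) E1 E3 E2)
        | exact (mid_contra S q1 q2 u1 u2 t2 t1 t3 Hu ltac:(lra) E2 E1 E3)
        | exact (mid_contra S q1 q2 u1 u2 t2 t3 t1 Hu ltac:(lra) E2 E3 E1)
        | exact (mid_contra S q1 q2 u1 u2 t3 t1 t2 Hu ltac:(lra) E3 E1 E2)
        | exact (mid_contra S q1 q2 u1 u2 t3 t2 t1 Hu ltac:(lra) E3 E2 E1)
        | lra ].
Qed.

Lemma dec_false (P : Prop) : negb (dec P) = true -> ~ P.
Proof. unfold dec; destruct (excluded_middle_informative P); simpl; auto; discriminate. Qed.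

Lemma col2 (q a b : point) : 0 <= cr (vsub q a) (vsub b a) -> 0 <= cr (vsub q b) (vsub a b) ->
  cr (vsub a q) (vsub b q) = 0.
Proof.
  destruct q as [q1 q2], a as [a1 a2], b as [b1 b2]; unfold cr, vsub; simpl; intros h1 h2.
  set (K := (a1 - q1) * (b2 - q2) - (a2 - q2) * (b1 - q1)).
  assert (e1 : (q1 - a1) * (b2 - a2) - (q2 - a2) * (b1 - a1) = - K) by (unfold K; ring).
  assert (e2 : (q1 - b1) * (a2 - b2) - (q2 - b2) * (a1 - b1) = K) by (unfold K; ring).
  lra.
Qed.

Lemma nz (a q : point) : a <> q -> 0 < dt (vsub a q) (vsub a q).
Proof.
  destruct a as [a1 a2], q as [q1 q2]; unfold dt, vsub; simpl; intros Hn.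
  apply Rnot_le_lt; intro.
  assert (h1 := Rle_0_sqr (a1 - q1)). assert (h2 := Rle_0_sqr (a2 - q2)). unfold Rsqr in *.
  assert (z1 : (a1 - q1) * (a1 - q1) = 0) by lra.
  assert (z2 : (a2 - q2) * (a2 - q2) = 0) by lra.
  apply Rmult_integral in z1. apply Rmult_integral in z2.
  apply Hn. f_equal; lra.
Qed.

Lemma three (S : point -> Prop) (q : point) (L : list point) : NoDup L ->
  (forall x, In x L -> extreme_point S x /\ x <> q /\
     forall y, S y -> 0 <= cr (vsub q x) (vsub y x)) -> (length L <= 2)%nat.
Proof.
  intros HL HA. destruct L as [|x1 [|x2 [|x3 r]]]; simpl; try lia. exfalso.
  apply NoDup_cons_iff in HL as [n1 HL]. apply NoDup_cons_iff in HL as [n2 _].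
  assert (d12 : x1 <> x2) by (intro e; apply n1; left; auto).
  assert (d13 : x1 <> x3) by (intro e; apply n1; right; left; auto).
  assert (d23 : x2 <> x3) by (intro e; apply n2; left; auto).
  destruct (HA x1 ltac:(simpl; auto)) as [E1 [q1n W1]].
  destruct (HA x2 ltac:(simpl; auto)) as [E2 [q2n W2]].
  destruct (HA x3 ltac:(simpl; auto)) as [E3 [q3n W3]].
  assert (c12 := col2 q x1 x2 (W1 x2 (proj1 E2)) (W2 x1 (proj1 E1))).
  assert (c13 := col2 q x1 x3 (W1 x3 (proj1 E3)) (W3 x1 (proj1 E1))).
  assert (Hu := nz x1 q q1n).
  destruct (param _ _ c12 Hu) as [P21 P22].
  destruct (param _ _ c13 Hu) as [P31 P32].
  set (t2 := dt (vsub x1 q) (vsub x2 q) / dt (vsub x1 q) (vsub x1 q)) in *.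
  set (t3 := dt (vsub x1 q) (vsub x3 q) / dt (vsub x1 q) (vsub x1 q)) in *.
  clearbody t2 t3.
  destruct q as [q1 q2], x1 as [a1 a2], x2 as [b1 b2], x3 as [c1 c2].
  unfold vsub, dt in *; simpl in *.
  assert (X1 : (a1, a2) = (q1 + 1 * (a1 - q1), q2 + 1 * (a2 - q2))) by (f_equal; ring).
  assert (X2 : (b1, b2) = (q1 + t2 * (a1 - q1), q2 + t2 * (a2 - q2))) by (f_equal; lra).
  assert (X3 : (c1, c2) = (q1 + t3 * (a1 - q1), q2 + t3 * (a2 - q2))) by (f_equal; lra).
  rewrite X1 in E1. rewrite X2 in E2. rewrite X3 in E3.
  apply (three_pts S q1 q2 (a1 - q1) (a2 - q2) 1 t2 t3 Hu); auto.
  - intro e; apply d12; rewrite X2, <- e; f_equal; ring.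
  - intro e; apply d23; rewrite X2, X3, e; auto.
  - intro e; apply d13; rewrite X3, <- e; f_equal; ring.
Qed.

Lemma mid_eq (x : point) (e : R) :
  x = comb (1/2) (fst x + e * fst ((1,0) : point), snd x + e * snd ((1,0) : point))
                 (fst x + e * fst ((-1,0) : point), snd x + e * snd ((-1,0) : point)).
Proof. destruct x; unfold comb; simpl; f_equal; field. Qed.

Lemma witness (Ps : list upoint) (P : list point) (beta : R) (x : point) :
  (forall U, In U Ps -> valid_upoint U) ->
  (forall p, In p P <-> exists U, In U Ps /\ In p (sites U)) ->
  extreme_point (beta_hull beta Ps) x -> ~ In x P ->
  exists q, In q P /\ forall y, beta_hull beta Ps y -> 0 <= cr (vsub q x) (vsub y x).
Proof.
  intros Hv HP [Hx Hext] HxP.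
  apply NNPP; intro Hn.
  assert (Hsite : forall U q, In U Ps -> In q U -> In (fst q) P).
  { intros U q HU Hq. apply HP. exists U; split; auto. unfold sites; apply in_map; auto. }
  assert (Hnn : forall U q, In U Ps -> In q U -> 0 <= snd q).
  { intros U q HU Hq. destruct (Hv U HU) as [_ [H2 _]]. specialize (H2 q Hq); lra. }
  assert (Half : forall C s, convex C -> beta_dense beta Ps C -> In s P -> C s ->
            exists w, In w P /\ C w /\ cr (vsub s x) (vsub w x) < 0).
  { intros C s HC HD Hs Cs. apply NNPP; intro Hno. apply Hn. exists s; split; auto.
    intros y Hy. apply (Hy (fun y => 0 <= cr (vsub s x) (vsub y x))).
    - intros y1 y2 t h1 h2 ht.
      replace (cr (vsub s x) (vsub (comb t y1 y2) x)) with
        ((1 - t) * cr (vsub s x) (vsub y1 x) + t * cr (vsub s x) (vsub y2 x))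
        by (destruct s, x, y1, y2; unfold cr, vsub, comb; simpl; ring).
      apply Rplus_le_le_0_compat; apply Rmult_le_pos; lra.
    - intros U HU. apply Rle_trans with (mass C U); [apply HD; auto|].
      apply mass_mono. intros; eapply Hnn; eauto.
      intros q Hq Cq. apply Rnot_lt_le; intro Hlt. apply Hno.
      exists (fst q); repeat split; eauto. }
  assert (Ne : forall C, convex C -> beta_dense beta Ps C -> exists s, In s P /\ C s).
  { intros C HC HD. apply NNPP; intro Hno.
    apply (Hx (fun _ => False)).
    - intros ? ? ? [].
    - intros U HU. apply Rle_trans with (mass C U); [apply HD; auto|].
      apply mass_mono. intros; eapply Hnn; eauto.
      intros q Hq Cq. apply Hno. exists (fst q); eauto. }
  set (Kf := fun (d : point) (pr : point * point) =>
     1 + Rabs (cr d (vsub (snd pr) x) / cr (vsub (fst pr) x) (vsub (snd pr) x))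
       + Rabs (cr (vsub (fst pr) x) d / cr (vsub (fst pr) x) (vsub (snd pr) x))
       + Rabs (dt d (vsub (fst pr) x) / dt (vsub (fst pr) x) (vsub (fst pr) x))).
  assert (Kpos : forall d pr, 1 <= Kf d pr).
  { intros d pr; unfold Kf.
    assert (h1 := Rabs_pos (cr d (vsub (snd pr) x) / cr (vsub (fst pr) x) (vsub (snd pr) x))).
    assert (h2 := Rabs_pos (cr (vsub (fst pr) x) d / cr (vsub (fst pr) x) (vsub (snd pr) x))).
    assert (h3 := Rabs_pos (dt d (vsub (fst pr) x) / dt (vsub (fst pr) x) (vsub (fst pr) x))).
    lra. }
  set (g := fun pr => Kf (1,0) pr + Kf (-1,0) pr).
  assert (gpos : forall z, In z (list_prod P P) -> 0 <= g z).
  { intros z _; unfold g; assert (h1 := Kpos (1,0) z); assert (h2 := Kpos (-1,0) z); lra. }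
  destruct (sum_le _ g gpos) as [S0 Sle].
  set (Ssum := fold_right (fun z acc => g z + acc) 0 (list_prod P P)) in *.
  set (eps := 1 / (1 + Ssum)).
  assert (eps_pos : 0 < eps) by (unfold eps; apply Rdiv_lt_0_compat; lra).
  assert (Heps : forall d pr, (d = (1,0) \/ d = (-1,0)) -> In pr (list_prod P P) ->
              eps * Kf d pr <= 1).
  { intros d pr Hd Hpr. specialize (Sle pr Hpr). unfold g in Sle.
    assert (h1 := Kpos (1,0) pr); assert (h2 := Kpos (-1,0) pr).
    assert (Kf d pr <= 1 + Ssum) by (destruct Hd as [-> | ->]; lra).
    assert (e : eps * (1 + Ssum) = 1) by (unfold eps; field; lra).
    nra. }
  assert (key : forall d, (d = (1,0) \/ d = (-1,0)) -> forall C, convex C ->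
        beta_dense beta Ps C -> C (fst x + eps * fst d, snd x + eps * snd d)).
  { intros d Hd C HC HD.
    assert (Cx : C x) by (apply Hx; auto).
    set (L := map (fun s => vsub s x) (filter (fun s => dec (C s)) P)).
    assert (inL : forall v, In v L <-> exists s, v = vsub s x /\ In s P /\ C s).
    { intros v; unfold L; rewrite in_map_iff; split.
      - intros [s [<- Hs]]. apply filter_In in Hs as [Hs Hc].
        apply (proj1 (dec_true (C s))) in Hc. eauto.
      - intros [s [-> [Hs Cs]]]. exists s; split; auto. apply filter_In; split; auto.
        apply dec_true; auto. }
    assert (dd : 0 < dt d d) by (destruct Hd as [-> | ->]; unfold dt; simpl; lra).
    assert (LNE : L <> []).
    { destruct (Ne C HC HD) as [s [Hs Cs]]. intro E.
      assert (Hin : In (vsub s x) L) by (apply inL; eauto). rewrite E in Hin; destruct Hin. }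
    assert (Hyp : forall v, In v L -> exists w, In w L /\ cr v w < 0).
    { intros v Hv0. apply inL in Hv0 as [s [-> [Hs Cs]]].
      destruct (Half C s HC HD Hs Cs) as [w [Hw [Cw Hlt]]].
      exists (vsub w x); split; auto. apply inL; eauto. }
    destruct (cone L d dd LNE Hyp) as [[a [b [Ha [Hb [Hab [Hdb Had]]]]]] | [a [Ha [Hda Hpa]]]].
    - apply inL in Ha as [sa [-> [Hsa Csa]]]. apply inL in Hb as [sb [-> [Hsb Csb]]].
      apply (reach2 C x sa sb d eps); auto.
      assert (K := Heps d (sa, sb) Hd ltac:(apply in_prod; auto)). unfold Kf in K; simpl in K.
      assert (h3 := Rabs_pos (dt d (vsub sa x) / dt (vsub sa x) (vsub sa x))).
      nra.
    - apply inL in Ha as [sa [-> [Hsa Csa]]].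
      apply (reach1 C x sa d eps); auto.
      assert (K := Heps d (sa, sa) Hd ltac:(apply in_prod; auto)). unfold Kf in K; simpl in K.
      assert (h1 := Rabs_pos (cr d (vsub sa x) / cr (vsub sa x) (vsub sa x))).
      assert (h2 := Rabs_pos (cr (vsub sa x) d / cr (vsub sa x) (vsub sa x))).
      nra. }
  assert (H1 := fun C HC HD => key (1,0) (or_introl eq_refl) C HC HD).
  assert (H2 := fun C HC HD => key (-1,0) (or_intror eq_refl) C HC HD).
  assert (E := Hext _ _ (1/2) H1 H2 ltac:(lra) (mid_eq x eps)).
  apply (f_equal fst) in E. simpl in E. lra.
Qed.

Theorem mainTheorem9 :
  exists c : nat,
    forall (Ps : list upoint) (P : list point) (beta : R),
      (forall U, In U Ps -> valid_upoint U) ->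
      NoDup P ->
      (forall p, In p P <-> exists U, In U Ps /\ In p (sites U)) ->
      0 <= beta <= 1 ->
      exists V : list point,
        (length V <= c * length P)%nat /\
        (forall x, extreme_point (beta_hull beta Ps) x -> In x V).
Proof.
  exists 3%nat. intros Ps P beta Hv HnP HP Hb.
  apply maxlist. intros L HL HE.
  rewrite (length_filter_split (fun x => dec (In x P)) L).
  assert (A1 : (length (filter (fun x => dec (In x P)) L) <= length P)%nat).
  { apply NoDup_incl_length. apply NoDup_filter; auto.
    intros x Hx. apply filter_In in Hx as [_ Hd].
    apply (proj1 (dec_true (In x P))) in Hd; auto. }
  assert (A2 : (length (filter (fun x => negb (dec (In x P))) L) <= 2 * length P)%nat).
  { apply (count_witness (fun x => extreme_point (beta_hull beta Ps) x /\ ~ In x P)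
      (fun q x => In q P /\ forall y, beta_hull beta Ps y -> 0 <= cr (vsub q x) (vsub y x)) P).
    - intros q L' HL' HG. apply (three (beta_hull beta Ps) q); auto.
      intros x Hx. destruct (HG x Hx) as [[Ex nx] [Hq Wx]].
      split; [exact Ex|split; [intro e; subst; contradiction|exact Wx]].
    - apply NoDup_filter; auto.
    - intros x Hx. apply filter_In in Hx as [Hx Hd].
      assert (nx := dec_false _ Hd).
      split; [split; auto|].
      destruct (witness Ps P beta x Hv HP (HE x Hx) nx) as [q [Hq Wq]]. eauto. }
  lia.
Qed.
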